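(* Let $A, B \in \mathbb{R}^{n\times n}$ be symmetric, isospectral, and both friendly. Then there is at most one doubly stochastic matrix $X \in \mathcal{D}(n)$ with $\|XA - BX\|_F^2 = 0$ (equivalently, with $XA = BX$).
   Context: A real symmetric matrix $A$ is called friendly if all of its eigenvalues are distinct (each has multiplicity one) and each unit eigenvector $u$ satisfies $\langle u, \mathbb{1}_n\rangle \ne 0$, where $\mathbb{1}_n$ is the all-ones vector. $A$ and $B$ are isospectral if they have the same distinct eigenvalues with the same multiplicities. $\mathcal{D}(n)$ is the set of doubly stochastic $n\times n$ matrices (entrywise nonnegative with all row and column sums equal to 1). $\|\cdot\|_F$ is the Frobenius norm. *)

(* Defs.v *)
From HB Require Import structures.
From mathcomp Require Import all_boot all_order all_algebra.
From mathcomp Require Import reals.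
Set Implicit Arguments. Unset Strict Implicit. Unset Printing Implicit Defensive.
Import Order.TTheory GRing.Theory Num.Theory.
Local Open Scope ring_scope.

Section Defs.
Variable R : realType.

Definition eig_mult n (A : 'M[R]_n) (a : R) : nat := mup a (char_poly A).

Definition ones n : 'cV[R]_n := const_mx 1.

Definition inner n (u v : 'cV[R]_n) : R := \sum_(i < n) u i 0 * v i 0.

Definition sym_mx n (A : 'M[R]_n) : Prop := A^T = A.

Definition friendly n (A : 'M[R]_n) : Prop :=
  sym_mx A /\
  (forall a : R, root (char_poly A) a -> eig_mult A a = 1%N) /\
  (forall (a : R) (u : 'cV[R]_n), A *m u = a *: u -> inner u u = 1 ->
      inner u (ones n) != 0).

Definition isospectral n (A B : 'M[R]_n) : Prop :=
  forall a : R, eig_mult A a = eig_mult B a.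

Definition doubly_stochastic n (X : 'M[R]_n) : Prop :=
  (forall i j, 0 <= X i j) /\
  (forall i, \sum_(j < n) X i j = 1) /\
  (forall j, \sum_(i < n) X i j = 1).

Definition frob2 m n (M : 'M[R]_(m, n)) : R := \sum_(i < m) \sum_(j < n) M i j ^+ 2.

End Defs.

(* Main.v *)
Require Import Defs.
From HB Require Import structures.
From mathcomp Require Import all_boot all_order all_algebra.
From mathcomp Require Import reals.
From mathcomp Require Import complex.
From mathcomp Require Import lra.
Set Implicit Arguments. Unset Strict Implicit.
Import Order.TTheory GRing.Theory Num.Theory.
Local Open Scope ring_scope.
Section S.
Variable R : realType.
Local Notation ReC := (@complex.Re R).
Local Notation ImC := (@complex.Im R).
Local Notation rc := (real_complex R).
Lemma ReD (x y : R[i]) : ReC (x + y) = ReC x + ReC y. Proof. case: x => a b; case: y => c d. by []. Qed.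
Lemma ImD (x y : R[i]) : ImC (x + y) = ImC x + ImC y. Proof. case: x => a b; case: y => c d. by []. Qed.
Lemma ReM (x y : R[i]) : ReC (x * y) = ReC x * ReC y - ImC x * ImC y. Proof. case: x => a b; case: y => c d. by []. Qed.
Lemma ImM (x y : R[i]) : ImC (x * y) = ReC x * ImC y + ImC x * ReC y. Proof. case: x => a b; case: y => c d. by []. Qed.

Lemma sq_eq0 n (v : 'rV[R]_n) : (v *m v^T) 0 0 = 0 -> v = 0.
Proof.
rewrite mxE; under eq_bigr do rewrite mxE -expr2.
move=> H; apply/rowP => j; rewrite mxE.
have := psumr_eq0P (fun i _ => sqr_ge0 (v 0 i)) H.
move=> /(_ j isT) /eqP; rewrite sqrf_eq0 => /eqP ->. by [].
Qed.

Lemma sq_ge0 n (v : 'rV[R]_n) : 0 <= (v *m v^T) 0 0.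
Proof. rewrite mxE; apply: sumr_ge0 => i _; rewrite mxE -expr2; exact: sqr_ge0. Qed.

Lemma dotC n (u v : 'rV[R]_n) : (u *m v^T) 0 0 = (v *m u^T) 0 0.
Proof.
have -> : (u *m v^T) 0 0 = (u *m v^T)^T 0 0 by rewrite [RHS]mxE.
by rewrite trmx_mul trmxK.
Qed.

Lemma sym_eig_real n (A : 'M[R]_n) : A^T = A ->
  forall z : R[i], root (map_poly rc (char_poly A)) z -> ImC z = 0.
Proof.
move=> sA z; rewrite map_char_poly -eigenvalue_root_char => /eigenvalueP [w Hw w0].
set x := map_mx ReC w; set y := map_mx ImC w.
set a := ReC z; set b := ImC z.
have Hx : x *m A = a *: x - b *: y.
  apply/rowP => j; rewrite /x /y !mxE.
  have := congr1 (fun M : 'M[R[i]]_(1,n) => ReC (M 0 j)) Hw => /=.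
  rewrite [(w *m _) 0 j]mxE [(z *: w) 0 j]mxE (big_morph ReC ReD (erefl : ReC 0 = 0)) ReM => <-.
  by apply: eq_bigr => i _; rewrite !mxE ReM /= mulr0 subr0.
have Hy : y *m A = a *: y + b *: x.
  apply/rowP => j; rewrite /x /y !mxE.
  have := congr1 (fun M : 'M[R[i]]_(1,n) => ImC (M 0 j)) Hw => /=.
  rewrite [(w *m _) 0 j]mxE [(z *: w) 0 j]mxE (big_morph ImC ImD (erefl : ImC 0 = 0)) ImM => <-.
  by apply: eq_bigr => i _; rewrite !mxE ImM /= mulr0 add0r.
have E : (x *m A *m y^T) 0 0 = (y *m A *m x^T) 0 0.
  have -> : (y *m A *m x^T) 0 0 = (y *m A *m x^T)^T 0 0 by rewrite [RHS]mxE.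
  by rewrite !trmx_mul trmxK sA mulmxA.
move: E; rewrite Hx Hy !mulmxBl !mulmxDl -!scalemxAl.
have := sq_ge0 x; have := sq_ge0 y; have := @dotC n y x.
set sxy := (x *m y^T); set syx := (y *m x^T); set sxx := (x *m x^T); set syy := (y *m y^T).
rewrite !mxE => D Hy0 Hx0; rewrite D => E.
have Eb : b * ((x *m x^T) 0 0 + (y *m y^T) 0 0) = 0.
  rewrite !mxE; move: E; lra.
apply/eqP; apply/negPn/negP => b0.
move: Eb => /eqP; rewrite mulf_eq0 (negbTE b0) /= => /eqP.
move=> /eqP; rewrite paddr_eq0 ?sq_ge0 // => /andP [/eqP /sq_eq0 x0 /eqP /sq_eq0 y0].
apply/negP: w0; apply/negPn/eqP/rowP => j.
have := congr1 (fun M : 'rV[R]_n => M 0 j) x0; have := congr1 (fun M : 'rV[R]_n => M 0 j) y0.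
rewrite !mxE; case: (w 0 j) => p q /= -> ->. by [].
Qed.

Lemma inner_eq0 n (v : 'cV[R]_n) : inner v v = 0 -> v = 0.
Proof.
rewrite /inner; under eq_bigr do rewrite -expr2.
move=> H; apply/colP => j; rewrite mxE.
have := psumr_eq0P (fun i _ => sqr_ge0 (v i 0)) H.
move=> /(_ j isT) /eqP; rewrite sqrf_eq0 => /eqP ->. by [].
Qed.

Lemma inner_ge0 n (v : 'cV[R]_n) : 0 <= inner v v.
Proof. apply: sumr_ge0 => i _; rewrite -expr2; exact: sqr_ge0. Qed.

Lemma innerZl n c (u v : 'cV[R]_n) : inner (c *: u) v = c * inner u v.
Proof. rewrite /inner mulr_sumr; apply: eq_bigr => i _; rewrite mxE mulrA. by []. Qed.
Lemma innerZr n c (u v : 'cV[R]_n) : inner u (c *: v) = c * inner u v.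
Proof. rewrite /inner mulr_sumr; apply: eq_bigr => i _; rewrite mxE mulrCA. by []. Qed.

Lemma col_kill n (A : 'M[R]_n) a (M : 'M[R]_n) :
  (forall (a : R) (u : 'cV[R]_n), A *m u = a *: u -> inner u u = 1 ->
      inner u (ones R n) != 0) ->
  A *m M = a *: M -> (ones R n)^T *m M = 0 -> M = 0.
Proof.
move=> Hf HA H1; apply/matrixP => i j; rewrite mxE.
set v := col j M.
have Av : A *m v = a *: v.
  apply/colP => k; have := congr1 (fun N : 'M[R]_n => N k j) HA; rewrite /= !mxE => <-.
  by apply: eq_bigr => l _; rewrite !mxE.
have v1 : inner v (ones R n) = 0.
  have := congr1 (fun N : 'M[R]_(1,n) => N 0 j) H1; rewrite /= !mxE => <-.
  by apply: eq_bigr => k _; rewrite !mxE mulr1 mul1r.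
have [v0 | vn0] := eqVneq v 0.
  by have := congr1 (fun N : 'cV[R]_n => N i 0) v0; rewrite !mxE.
have pos : 0 < inner v v.
  rewrite lt_def inner_ge0 andbT; apply/eqP => /inner_eq0 E; by rewrite E eqxx in vn0.
set c := Num.sqrt (inner v v).
have c0 : 0 < c by rewrite sqrtr_gt0.
suff : inner (c^-1 *: v) (ones R n) != 0 by rewrite innerZl v1 mulr0 eqxx.
apply: (Hf a).
  by rewrite -scalemxAr Av !scalerA mulrC.
rewrite innerZl innerZr mulrA -expr2 exprVn sqr_sqrtr ?inner_ge0 // mulVf //.
by rewrite gt_eqF.
Qed.

Lemma kill_all n' (A : 'M[R]_n'.+1) :
  (forall (a : R) (u : 'cV[R]_n'.+1), A *m u = a *: u -> inner u u = 1 ->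
      inner u (ones R n'.+1) != 0) ->
  forall p : {poly R}, p \is monic ->
  (forall z : R[i], root (map_poly rc p) z -> ImC z = 0) ->
  forall M, A *m M = M *m A -> (ones R n'.+1)^T *m M = 0 ->
    horner_mx A p *m M = 0 -> M = 0.
Proof.
move=> Hf p; have [k] := ubnP (size p); elim: k p => [//|k IH] p.
rewrite ltnS => szp mp Hr M AM HM HpM.
have [s1 | s1] := eqVneq (size p) 1%N.
  have p1 : p = 1.
    move/eqP: s1 => /size_poly1P [c _ Dp]; move: mp; rewrite Dp monicE lead_coefC => /eqP ->.
    by [].
  by move: HpM; rewrite p1 rmorph1 mul1mx.
have [z rz] : exists z, root (map_poly rc p) z.
  by apply/closed_rootP; rewrite size_map_poly.
have Iz := Hr z rz.
have Ez : z = rc (ReC z) by case: z Iz rz {Hr} => u v /= ->.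
move: rz; rewrite Ez fmorph_root => /factor_theorem [q Dp].
set a := ReC z.
have mq : q \is monic by move: mp; rewrite Dp monicMr ?monicXsubC.
have szq : (size q < k)%N.
  by move: szp; rewrite Dp size_Mmonic ?monic_neq0 ?monicXsubC // size_XsubC addn2.
set M' := (A - a%:M) *m M.
have cA : A *m (A - a%:M) = (A - a%:M) *m A.
  by rewrite mulmxBr mulmxBl mul_mx_scalar mul_scalar_mx.
have M'0 : M' = 0.
  apply: (IH q szq mq).
  - by move=> w rw; apply: Hr; rewrite Dp rmorphM /= rootM rw.
  - by rewrite /M' mulmxA cA -!mulmxA AM.
  - by rewrite /M' mulmxBl mulmxBr AM mul_scalar_mx -scalemxAr !mulmxA HM mul0mx scaler0 subr0.
  - by move: HpM; rewrite Dp rmorphM rmorphB /= horner_mx_X horner_mx_C -mulmxE mulmxA.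
apply: (@col_kill _ A a M Hf _ HM).
move: M'0; rewrite /M' mulmxBl => /eqP; rewrite subr_eq0 mul_scalar_mx => /eqP. by [].
Qed.

Lemma frob0 n (M : 'M[R]_n) : frob2 M = 0 -> M = 0.
Proof.
rewrite /frob2 => H; apply/matrixP => i j; rewrite mxE.
have Hge : forall i, true -> 0 <= \sum_(j < n) M i j ^+ 2.
  by move=> k _; apply: sumr_ge0 => l _; exact: sqr_ge0.
have := psumr_eq0P Hge H.
move=> /(_ i isT) H2.
have := psumr_eq0P (fun j _ => sqr_ge0 (M i j)) H2.
by move=> /(_ j isT) /eqP; rewrite sqrf_eq0 => /eqP.
Qed.
End S.

Theorem mainTheorem9 (R : realType) (n : nat) (A B : 'M[R]_n) :
  sym_mx A -> sym_mx B -> isospectral A B -> friendly A -> friendly B ->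
  forall X Y : 'M[R]_n,
    doubly_stochastic X -> frob2 (X *m A - B *m X) = 0 ->
    doubly_stochastic Y -> frob2 (Y *m A - B *m Y) = 0 ->
    X = Y.
Proof.
move=> sA sB _ [_ [_ Hf]] _ X Y [_ [Xr _]] fX [_ [Yr _]] fY.
have sA' : A^T = A := sA.
have sB' : B^T = B := sB.
case: n A B X Y sA sB sA' sB' Hf Xr Yr fX fY => [|n'] A B X Y sA sB sA' sB' Hf Xr Yr fX fY.
  by apply/matrixP => [[]].
have EX : X *m A = B *m X by apply/eqP; rewrite -subr_eq0; apply/eqP/frob0.
have EY : Y *m A = B *m Y by apply/eqP; rewrite -subr_eq0; apply/eqP/frob0.
set Z := X - Y.
have ZA : Z *m A = B *m Z by rewrite /Z mulmxBl mulmxBr EX EY.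
have Z1 : Z *m ones R n'.+1 = 0.
  apply/colP => i; rewrite !mxE.
  under eq_bigr do rewrite !mxE mulr1.
  by rewrite sumrB Xr Yr subrr.
set W := Z^T *m Z.
have AW : A *m W = W *m A.
  rewrite /W mulmxA -{1}sA' -trmx_mul ZA trmx_mul sB' -!mulmxA ZA. by [].
have W1 : (ones R n'.+1)^T *m W = 0 by rewrite /W mulmxA -trmx_mul Z1 trmx0 mul0mx.
have W0 : W = 0.
  apply: (kill_all Hf (char_poly_monic A) (sym_eig_real sA') AW W1).
  by rewrite Cayley_Hamilton mul0mx.
have Z0 : Z = 0.
  clearbody Z; apply/matrixP => i j; rewrite [RHS]mxE.
  have := congr1 (fun N : 'M[R]_n'.+1 => N j j) W0; rewrite /W !mxE.
  under eq_bigr do rewrite mxE -expr2.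
  move=> H.
  have := psumr_eq0P (fun k _ => sqr_ge0 (Z k j)) H.
  by move=> /(_ i isT) /eqP; rewrite sqrf_eq0 => /eqP.
exact: subr0_eq.
Qed.
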